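(* Let $\phi:M_D(\mathbb{C})\to M_D(\mathbb{C})$ be a primitive unital Schwarz map and let $\varrho$ be the Perron–Frobenius eigenvector of $\phi^*$. Then for every $n\in\mathbb{N}$, $$\mathcal{M}_{\phi^n}=\{a\in M_D(\mathbb{C}) : \langle a,a\rangle_\varrho=\langle \phi^n(a),\phi^n(a)\rangle_\varrho \text{ and } \langle a^*,a^*\rangle_\varrho=\langle \phi^n(a)^*,\phi^n(a)^*\rangle_\varrho\}.$$
   Context: $M_D(\mathbb{C})$ is the algebra of complex $D\times D$ matrices. A linear map $\phi$ is a unital Schwarz map if $\phi(I)=I$ and $\phi(a^*a)\ge\phi(a)^*\phi(a)$ for all $a$; it is primitive if some power $\phi^n$ maps every nonzero positive semidefinite matrix to a positive definite matrix. $\phi^*$ denotes the adjoint of $\phi$ with respect to the Hilbert–Schmidt inner product $\langle a,b\rangle=\mathrm{Tr}(a^*b)$. The Perron–Frobenius eigenvector of $\phi^*$ is the unique positive definite $\varrho$ with $\mathrm{Tr}(\varrho)=1$ and $\phi^*(\varrho)=r\varrho$, $r$ the spectral radius (here $r=1$, so $\phi^*(\varrho)=\varrho$). For positive definite $z$, $\langle a,b\rangle_z:=\mathrm{Tr}(z a^*b)$. For a unital Schwarz map $\psi$, the multiplicative domain is $\mathcal{M}_\psi=\{a : \psi(a^*a)=\psi(a)^*\psi(a) \text{ and } \psi(aa^* )=\psi(a)\psi(a)^*\}$. *)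

(* Defs.v *)
From HB Require Import structures.
From mathcomp Require Import all_boot all_order all_algebra.
From mathcomp Require Import reals.
From mathcomp.real_closed Require Export complex.

Set Implicit Arguments.
Unset Strict Implicit.
Unset Printing Implicit Defensive.

Import Order.TTheory GRing.Theory Num.Theory.
Local Open Scope ring_scope.

(* Matrices M_D(C) over a numeric closed field C (instantiated with C = R[i],
   R : realType, i.e. the complex numbers, in the statement). *)
Section MatrixMaps.
Context {C : numClosedFieldType} {D : nat}.

Definition mxadj m n (A : 'M[C]_(m, n)) : 'M[C]_(n, m) := map_mx Num.conj A^T.

Definition hermitian (A : 'M[C]_D) : Prop := mxadj A = A.

Definition psd (A : 'M[C]_D) : Prop :=
  hermitian A /\ forall v : 'cV[C]_D, 0 <= (mxadj v *m A *m v) 0 0.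

Definition posdef (A : 'M[C]_D) : Prop :=
  hermitian A /\ forall v : 'cV[C]_D, v != 0 -> 0 < (mxadj v *m A *m v) 0 0.

Definition hs (a b : 'M[C]_D) : C := \tr (mxadj a *m b).

Definition hs_w (z a b : 'M[C]_D) : C := \tr (z *m mxadj a *m b).

Definition unital (phi : 'M[C]_D -> 'M[C]_D) : Prop := phi 1%:M = 1%:M.

Definition schwarz (phi : 'M[C]_D -> 'M[C]_D) : Prop :=
  forall a : 'M[C]_D, psd (phi (mxadj a *m a) - mxadj (phi a) *m phi a).

Definition primitive (phi : 'M[C]_D -> 'M[C]_D) : Prop :=
  exists n : nat, forall A : 'M[C]_D, psd A -> A != 0 -> posdef (iter n phi A).

(* Hilbert--Schmidt adjoint phi^*: <phi^* X, Y> = <X, phi Y>;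
   its (i,j) entry is <E_ij, phi^* X> = <phi E_ij, X>. *)
Definition hs_adjoint (phi : 'M[C]_D -> 'M[C]_D) (X : 'M[C]_D) : 'M[C]_D :=
  \matrix_(i, j) hs (phi (delta_mx i j)) X.

Definition mult_domain (psi : 'M[C]_D -> 'M[C]_D) (a : 'M[C]_D) : Prop :=
  psi (mxadj a *m a) = mxadj (psi a) *m psi a /\
  psi (a *m mxadj a) = psi a *m mxadj (psi a).

End MatrixMaps.

(* Main.v *)
Require Import Defs.
From HB Require Import structures.
From mathcomp Require Import all_boot all_order all_algebra.
From mathcomp Require Import reals ring.
From mathcomp.real_closed Require Import complex.
Import Order.TTheory GRing.Theory Num.Theory.
Local Open Scope ring_scope.



Section Adj.
Context {C : numClosedFieldType}.

Lemma mxadjK m n (A : 'M[C]_(m, n)) : mxadj (mxadj A) = A.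
Proof. by apply/matrixP => i j; rewrite !mxE conjCK. Qed.

Lemma mxadjM m n p (A : 'M[C]_(m, n)) (B : 'M[C]_(n, p)) :
  mxadj (A *m B) = mxadj B *m mxadj A.
Proof. by rewrite /mxadj trmx_mul map_mxM. Qed.

Lemma mxadjD m n (A B : 'M[C]_(m, n)) : mxadj (A + B) = mxadj A + mxadj B.
Proof. by apply/matrixP => i j; rewrite !mxE rmorphD. Qed.

Lemma mxadjN m n (A : 'M[C]_(m, n)) : mxadj (- A) = - mxadj A.
Proof. by apply/matrixP => i j; rewrite !mxE rmorphN. Qed.

Lemma mxadjB m n (A B : 'M[C]_(m, n)) : mxadj (A - B) = mxadj A - mxadj B.
Proof. by rewrite mxadjD mxadjN. Qed.

Lemma mxadjZ m n c (A : 'M[C]_(m, n)) : mxadj (c *: A) = c^* *: mxadj A.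
Proof. by apply/matrixP => i j; rewrite !mxE rmorphM. Qed.

Lemma mxadj_scalar n c : mxadj (c%:M : 'M[C]_n) = (c^*)%:M.
Proof. apply/matrixP => i j; by rewrite !mxE eq_sym rmorphMn. Qed.

Lemma mxadj_tr n (A : 'M[C]_n) : \tr (mxadj A) = (\tr A)^*.
Proof. by rewrite /mxtrace rmorph_sum; apply: eq_bigr => i _; rewrite !mxE. Qed.

End Adj.



Section Key.
Context {C : numClosedFieldType} {D : nat}.

Lemma quad_entry m n (A : 'M[C]_(m, n)) (M : 'M[C]_n) (B : 'M[C]_(n, m)) k :
  (row k A *m M *m col k B) 0 0 = (A *m M *m B) k k.
Proof.
rewrite -row_mul colE mulmxA -colE -row_mul.
by rewrite !mxE.
Qed.

Lemma psd_tr (rho S : 'M[C]_D) : posdef rho -> psd S ->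
  0 <= \tr (rho *m S) /\ (\tr (rho *m S) = 0 -> S = 0).
Proof.
move=> [rhoh rhop] [Sh Sp].
have Sn : S \is normalmx.
  apply/eqP. Local Open Scope sesquilinear_scope. change (S *m mxadj S = mxadj S *m S). by rewrite Sh.

have /orthomx_spectralP SE := Sn.
set P := spectralmx S in SE; set d := spectral_diag S in SE.
have Pu : P \is unitarymx := spectral_unitarymx S.
have PQ : P *m mxadj P = 1%:M by apply/unitarymxP.
have QE : invmx P = mxadj P by rewrite invmx_unitary.
have QP : mxadj P *m P = 1%:M by rewrite -QE mulVmx // unitarymx_unit.
rewrite QE in SE.
have adjcol k : mxadj (col k (mxadj P)) = row k P.
  by apply/matrixP => i j; rewrite !mxE conjCK.
have dk k : d 0 k = (mxadj (col k (mxadj P)) *m S *m col k (mxadj P)) 0 0.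
  rewrite adjcol quad_entry SE !mulmxA PQ mul1mx -mulmxA PQ mulmx1.
  by rewrite mxE eqxx mulr1n.
have vnz k : col k (mxadj P) != 0.
  apply/eqP => v0; have := @quad_entry _ _ P 1%:M (mxadj P) k.
  rewrite !mulmx1 PQ -adjcol v0 mulmx0 !mxE eqxx mulr1n.
  by move=> /eqP; rewrite eq_sym oner_eq0.
have rk k : 0 < (P *m rho *m mxadj P) k k.
  by rewrite -quad_entry -adjcol; apply: rhop.
have dge k : 0 <= d 0 k by rewrite dk; apply: Sp.
have trE : \tr (rho *m S) = \sum_k (P *m rho *m mxadj P) k k * d 0 k.
  rewrite SE !mulmxA mxtrace_mulC !mulmxA /mxtrace.
  by apply: eq_bigr => k _; rewrite mul_mx_diag mxE.
rewrite trE; split.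
  by apply: sumr_ge0 => k _; apply: mulr_ge0 => //; apply: ltW.
move=> /eqP; rewrite psumr_eq0; last by move=> k _; apply: mulr_ge0 => //; apply: ltW.
move=> /allP H.
have d0 : d = 0.
  apply/rowP => k; rewrite mxE; have := H k (mem_index_enum _).
  by rewrite mulf_eq0 (gt_eqF (rk k)) /= => /eqP.
by rewrite SE d0 raddf0 mulmx0 mul0mx.
Qed.
End Key.



Section Inv.
Context {C : numClosedFieldType} {D : nat}.

Lemma tr_delta (rho : 'M[C]_D) i j : \tr (rho *m delta_mx i j) = rho j i.
Proof.
rewrite -(mul_delta_mx (0 : 'I_1)) mulmxA -colE mxtrace_mulC -rowE.
by rewrite /mxtrace big_ord1 !mxE.
Qed.

Lemma tr_inv (phi : {linear 'M[C]_D -> 'M[C]_D}) (rho : 'M[C]_D) :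
  Defs.hermitian rho -> hs_adjoint phi rho = rho ->
  forall x, \tr (rho *m phi x) = \tr (rho *m x).
Proof.
move=> rh ha.
have hE i j : \tr (rho *m phi (delta_mx i j)) = \tr (rho *m delta_mx i j).
  have /matrixP /(_ i j) := ha; rewrite mxE /hs => /(congr1 Num.conj).
  rewrite -mxadj_tr mxadjM mxadjK rh => ->.
  by rewrite tr_delta -[in LHS]rh !mxE conjCK.
move=> x; rewrite [x in RHS]matrix_sum_delta [x in LHS]matrix_sum_delta.
rewrite !linear_sum /=.
apply: eq_bigr => i _; rewrite !linear_sum /=.
apply: eq_bigr => j _; rewrite !linearZ /=.
by rewrite hE.
Qed.

End Inv.



Lemma solve2 (F : numFieldType) (i a b c e : F) : i * i = -1 ->
  a + b = c + e -> -i * a + i * b = i * c - i * e -> a = e.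
Proof.
move=> hi h1 h2.
have two : (2 : F) != 0 by rewrite pnatr_eq0.
have -> : a = e + 2^-1 * ((a + b - (c + e)) + i * (-i * a + i * b - (i * c - i * e))
   + (i * i + 1) * (a - b + c - e)).
  by field.
by rewrite h1 h2 hi !subrr addNr !(mulr0, mul0r, addr0).
Qed.

Section Herm.
Context {C : numClosedFieldType} {D : nat}.

Lemma cK (s : C) : Num.conj (Num.conj s) = s. Proof. exact: conjCK. Qed.

Lemma phi_herm (phi : {linear 'M[C]_D -> 'M[C]_D}) : schwarz phi ->
  forall c : 'M[C]_D, mxadj (phi (mxadj c *m c)) = phi (mxadj c *m c).
Proof.
move=> hs c; have [h _] := hs c; move: h.
rewrite /Defs.hermitian mxadjB mxadjM mxadjK => h.
by have := congr1 (fun M => M + mxadj (phi c) *m phi c) h; rewrite /= !subrK.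
Qed.

Lemma expand (x : 'M[C]_D) s :
  mxadj (x + s%:M) *m (x + s%:M) =
  mxadj x *m x + s *: mxadj x + s^* *: x + (s^* * s)%:M.
Proof.
rewrite mxadjD mxadj_scalar mulmxDl !mulmxDr mul_mx_scalar !mul_scalar_mx.
by rewrite scale_scalar_mx addrA.
Qed.

Lemma adj_pres (phi : {linear 'M[C]_D -> 'M[C]_D}) : unital phi -> schwarz phi ->
  forall x, phi (mxadj x) = mxadj (phi x).
Proof.
move=> hu hs x.
have W s : s^* *: mxadj (phi (mxadj x)) + s *: mxadj (phi x) =
           s *: phi (mxadj x) + s^* *: phi x.
  have := @phi_herm phi hs (x + s%:M); rewrite expand !linearD !linearZ /=.
  rewrite -scalemx1 linearZ /= hu !mxadjD !mxadjZ phi_herm // scalemx1 mxadj_scalar.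
  have -> : (s^* * s)^* = s^* * s by rewrite mulrC geC0_conj // mul_conjC_ge0.
  rewrite rmorph1 scalemx1.
  move=> /(congr1 (fun M => M - (s^* * s)%:M)); rewrite !addrK -!addrA.
  move=> /(congr1 (fun M => - phi (mxadj x *m x) + M)); rewrite !addKr.
  by rewrite cK.
rewrite -[phi (mxadj x)]mxadjK; apply: f_equal.
apply/matrixP => k l; symmetry.
have /matrixP /(_ k l) := W 1; rewrite !mxE rmorph1 !mul1r => h1.
have /matrixP /(_ k l) := W 'i; rewrite !mxE conjCi => h2.
symmetry; apply: (@solve2 _ 'i _ _ _ _ _ h1); first by rewrite -expr2 sqrCi.
by rewrite h2 mulNr.
Qed.
End Herm.



Section Main.
Context {C : numClosedFieldType} {D : nat}.
Variables (phi : {linear 'M[C]_D -> 'M[C]_D}) (rho : 'M[C]_D).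
Hypotheses (hu : unital phi) (hs : schwarz phi) (hr : posdef rho)
  (ha : hs_adjoint phi rho = rho).

Let T (y : 'M[C]_D) := \tr (rho *m y).

Lemma tinv x : T (phi x) = T x.
Proof. by apply: tr_inv => //; case: hr. Qed.

Lemma T_iter n x : T (iter n phi x) = T x.
Proof. by elim: n => //= n IH; rewrite tinv IH. Qed.

Lemma adj_iter n x : iter n phi (mxadj x) = mxadj (iter n phi x).
Proof. by elim: n => //= n ->; rewrite adj_pres. Qed.

Lemma TB x y : T (x - y) = T x - T y.
Proof. by rewrite /T mulmxBr linearB. Qed.

Lemma claim n (a : 'M[C]_D) :
  0 <= T (mxadj a *m a) - T (mxadj (iter n phi a) *m iter n phi a) /\
  (T (mxadj a *m a) = T (mxadj (iter n phi a) *m iter n phi a) ->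
   iter n phi (mxadj a *m a) = mxadj (iter n phi a) *m iter n phi a).
Proof.
elim: n => [|n [IH1 IH2]] /=; first by rewrite subrr.
set b := iter n phi a.
have [P1 P2] := @psd_tr C D rho _ hr (hs b).
rewrite -/(T _) TB tinv in P1 P2.
have E : T (mxadj a *m a) - T (mxadj (phi b) *m phi b) =
   (T (mxadj a *m a) - T (mxadj b *m b)) +
   (T (mxadj b *m b) - T (mxadj (phi b) *m phi b)).
  by rewrite addrA subrK.
rewrite E; split; first exact: addr_ge0.
move=> /eqP; rewrite -subr_eq0 E paddr_eq0 // => /andP [/eqP h1 /eqP h2].
rewrite IH2; last by apply/eqP; rewrite -subr_eq0 h1.
by apply/eqP; rewrite -subr_eq0; apply/eqP/P2.
Qed.

Lemma main_gen n (a : 'M[C]_D) :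
    mult_domain (iter n phi) a <->
    (hs_w rho a a = hs_w rho (iter n phi a) (iter n phi a) /\
     hs_w rho (mxadj a) (mxadj a) =
       hs_w rho (mxadj (iter n phi a)) (mxadj (iter n phi a))).
Proof.
rewrite /hs_w -!mulmxA !mxadjK -!/(T _); split.
  move=> [h1 h2]; split; first by rewrite -h1 T_iter.
  by rewrite -h2 T_iter.
move=> [h1 h2]; split; first by have [_ ->] := claim n a.
have [_ H] := claim n (mxadj a).
rewrite (adj_iter _ a) !mxadjK in H; exact: H.
Qed.

End Main.

Theorem lemma3p1 (R : realType) (D : nat)
    (phi : {linear 'M[R[i]]_D -> 'M[R[i]]_D}) (rho : 'M[R[i]]_D) :
  unital phi -> schwarz phi -> primitive phi ->
  posdef rho -> \tr rho = 1 -> hs_adjoint phi rho = rho ->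
  forall (n : nat) (a : 'M[R[i]]_D),
    mult_domain (iter n phi) a <->
    (hs_w rho a a = hs_w rho (iter n phi a) (iter n phi a) /\
     hs_w rho (mxadj a) (mxadj a) =
       hs_w rho (mxadj (iter n phi a)) (mxadj (iter n phi a))).
Proof.
move=> hu hs _ hr _ ha n a.
exact: main_gen.
Qed.
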